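(* Let $M \in \mathbb{R}^{m,n}$ and $\epsilon \ge 0$. Let $\|\cdot\|$ be a column-wise matrix norm on $\mathbb{R}^{m,n}$, i.e. $\|A\| = \sum_{i=1}^n \alpha_i \|A(:,i)\|_c$ for some constants $\alpha_i > 0$ and some vector norm $\|\cdot\|_c$ on $\mathbb{R}^m$. Consider the two optimization problems \[ \text{(P1)}\quad \min_{X \in \mathbb{R}^{n,n}_+} \|X\|_{1,\infty} \ \text{ s.t. } \ \|M - MX\| \le \epsilon,\ X_{ij} \le 1 \ \forall i,j, \] \[ \text{(P2)}\quad \min_{X \in \mathbb{R}^{n,n}_+} \operatorname{trace}(X) \ \text{ s.t. } \ \|M - MX\| \le \epsilon,\ X_{ij} \le X_{ii} \le 1 \ \forall i,j. \] Then: (a) the optimal values of (P1) and (P2) coincide; (b) every optimal solution of (P2) is an optimal solution of (P1); (c) for every optimal solution $X^*$ of (P1) there exists an optimal solution $X^\dagger$ of (P2) with $\|M - MX^\dagger\| = \|M - MX^*\|$ (obtained from $X^*$ by raising diagonal entries to their row maxima and rescaling the off-diagonal entries of the corresponding columns).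
   Context: For $X \in \mathbb{R}^{n,n}$, $\|X\|_{1,\infty} := \sum_{i=1}^n \max_{1\le j\le n} |X_{ij}|$, the sum over rows of the $\ell_\infty$ norms of the rows. $\mathbb{R}^{n,n}_+$ denotes entrywise nonnegative $n\times n$ matrices. Both problems are feasible (e.g. $X = I$) and have compact feasible sets, so optimal solutions exist. *)

(* Defs.v *)
From HB Require Import structures.
From mathcomp Require Import all_boot all_order all_algebra.
Set Implicit Arguments. Unset Strict Implicit. Unset Printing Implicit Defensive.
Import Order.TTheory GRing.Theory Num.Theory.
Local Open Scope ring_scope.

Definition is_vnorm (R : realFieldType) (m : nat) (N : 'cV[R]_m -> R) : Prop :=
  [/\ forall x, 0 <= N x,
      forall x, N x = 0 -> x = 0,
      forall (a : R) x, N (a *: x) = `|a| * N x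
    & forall x y, N (x + y) <= N x + N y].

Definition colnorm (R : realFieldType) (m n : nat) (alpha : 'I_n -> R)
  (N : 'cV[R]_m -> R) (A : 'M[R]_(m, n)) : R :=
  \sum_(i < n) alpha i * N (col i A).

Definition norm1inf (R : realFieldType) (n : nat) (X : 'M[R]_n) : R :=
  \sum_(i < n) \big[Num.max/0]_(j < n) `|X i j|.

Definition feasP1 (R : realFieldType) (m n : nat) (M : 'M[R]_(m, n))
  (alpha : 'I_n -> R) (N : 'cV[R]_m -> R) (eps : R) (X : 'M[R]_n) : Prop :=
  (forall i j, 0 <= X i j) /\
  colnorm alpha N (M - M *m X) <= eps /\
  (forall i j, X i j <= 1).

Definition feasP2 (R : realFieldType) (m n : nat) (M : 'M[R]_(m, n))
  (alpha : 'I_n -> R) (N : 'cV[R]_m -> R) (eps : R) (X : 'M[R]_n) : Prop :=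
  (forall i j, 0 <= X i j) /\
  colnorm alpha N (M - M *m X) <= eps /\
  (forall i j, X i j <= X i i /\ X i i <= 1).

Definition optP1 (R : realFieldType) (m n : nat) (M : 'M[R]_(m, n))
  (alpha : 'I_n -> R) (N : 'cV[R]_m -> R) (eps : R) (X : 'M[R]_n) : Prop :=
  feasP1 M alpha N eps X /\
  forall Y, feasP1 M alpha N eps Y -> norm1inf X <= norm1inf Y.

Definition optP2 (R : realFieldType) (m n : nat) (M : 'M[R]_(m, n))
  (alpha : 'I_n -> R) (N : 'cV[R]_m -> R) (eps : R) (X : 'M[R]_n) : Prop :=
  feasP2 M alpha N eps X /\
  forall Y, feasP2 M alpha N eps Y -> \tr X <= \tr Y.

Definition is_glb (R : realFieldType) (S : R -> Prop) (v : R) : Prop :=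
  (forall r, S r -> v <= r) /\ (forall w, (forall r, S r -> w <= r) -> w <= v).

Definition valP1 (R : realFieldType) (m n : nat) (M : 'M[R]_(m, n))
  (alpha : 'I_n -> R) (N : 'cV[R]_m -> R) (eps : R) (v : R) : Prop :=
  is_glb (fun r => exists X, feasP1 M alpha N eps X /\ r = norm1inf X) v.

Definition valP2 (R : realFieldType) (m n : nat) (M : 'M[R]_(m, n))
  (alpha : 'I_n -> R) (N : 'cV[R]_m -> R) (eps : R) (v : R) : Prop :=
  is_glb (fun r => exists X, feasP2 M alpha N eps X /\ r = \tr X) v.

(* Main.v *)
Require Import Defs.
From HB Require Import structures.
From mathcomp Require Import all_boot all_order all_algebra.
From mathcomp Require Import ring lra.
Import Order.TTheory GRing.Theory Num.Theory.
Set Implicit Arguments. Unset Strict Implicit. Unset Printing Implicit Defensive.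
Local Open Scope ring_scope.

Section Helpers.
Variable R : realFieldType.
Variable n : nat.

Definition rmax (X : 'M[R]_n) (i : 'I_n) : R := \big[Num.max/0]_(j < n) `|X i j|.

Lemma rmax_ge (X : 'M[R]_n) i j : `|X i j| <= rmax X i.
Proof. rewrite /rmax (bigD1 j) //= le_max lexx //. Qed.

Lemma rmax_ge0 (X : 'M[R]_n) i : 0 <= rmax X i.
Proof.
rewrite /rmax; apply: (big_ind (fun x => 0 <= x)) => //.
by move=> x y hx hy; rewrite le_max hx.
Qed.

Lemma rmax_le (X : 'M[R]_n) i B : 0 <= B -> (forall j, `|X i j| <= B) -> rmax X i <= B.
Proof.
move=> hB hj; rewrite /rmax; apply: (big_ind (fun x => x <= B)) => //.
by move=> x y hx hy; rewrite ge_max hx hy.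
Qed.

Lemma norm1inf_rmax (X : 'M[R]_n) : norm1inf X = \sum_i rmax X i.
Proof. by []. Qed.

Lemma rmax_diag (X : 'M[R]_n) i : (forall j, 0 <= X i j) -> (forall j, X i j <= X i i) ->
  rmax X i = X i i.
Proof.
move=> h0 h1; apply/le_anti/andP; split.
  apply: rmax_le => // j; rewrite ger0_norm //.
by have := rmax_ge X i i; rewrite ger0_norm.
Qed.

Lemma norm1inf_tr (X : 'M[R]_n) : (forall i j, 0 <= X i j) -> (forall i j, X i j <= X i i) ->
  norm1inf X = \tr X.
Proof.
move=> h0 h1; rewrite norm1inf_rmax /mxtrace; apply: eq_bigr => i _.
exact: rmax_diag.
Qed.

Definition cf (X : 'M[R]_n) i : R :=
  if X i i == rmax X i then 1 else (1 - rmax X i) / (1 - X i i).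

Definition Tm (X : 'M[R]_n) : 'M[R]_n :=
  1%:M - (1%:M - X) *m diag_mx (\row_i cf X i).

Section Feas.
Variable X : 'M[R]_n.
Hypothesis H0 : forall i j, 0 <= X i j.
Hypothesis H1 : forall i j, X i j <= 1.

Lemma rmax_le1 i : rmax X i <= 1.
Proof. apply: rmax_le => // j; rewrite ger0_norm //. Qed.

Lemma diag_le_rmax i : X i i <= rmax X i.
Proof. by have := rmax_ge X i i; rewrite ger0_norm. Qed.

Lemma cf_bounds i : 0 <= cf X i /\ cf X i <= 1.
Proof.
rewrite /cf; case: eqP => [_|ne]; first by split.
have hlt : X i i < rmax X i by rewrite lt_neqAle diag_le_rmax andbT; apply/eqP.
have h1 := rmax_le1 i.
have hp : 0 < 1 - X i i by lra.
split; first by apply: divr_ge0; lra.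
by rewrite ler_pdivrMr // mul1r; lra.
Qed.

Lemma Tm_entry k i : Tm X k i = (k == i)%:R - ((k == i)%:R - X k i) * cf X i.
Proof. by rewrite /Tm mul_mx_diag !mxE. Qed.

Lemma Tm_diag i : Tm X i i = rmax X i.
Proof.
rewrite Tm_entry eqxx /= /cf; case: eqP => [->|ne]; first lra.
have hlt : X i i < rmax X i by rewrite lt_neqAle diag_le_rmax andbT; apply/eqP.
have h1 := rmax_le1 i.
have hp : 1 - X i i != 0 by apply/eqP; lra.
by field.
Qed.

Lemma Tm_off k i : k != i -> Tm X k i = X k i * cf X i.
Proof. by move=> /negbTE hk; rewrite Tm_entry hk /=; ring. Qed.

Lemma Tm_nonneg k i : 0 <= Tm X k i.
Proof.
have [->|hk] := eqVneq k i; first by rewrite Tm_diag rmax_ge0.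
rewrite Tm_off //; apply: mulr_ge0 => //; exact: (cf_bounds i).1.
Qed.

Lemma Tm_rows k i : Tm X k i <= Tm X k k /\ Tm X k k <= 1.
Proof.
rewrite Tm_diag; split; last exact: rmax_le1.
have [->|hk] := eqVneq k i; first by rewrite Tm_diag.
rewrite Tm_off //; have [c0 c1] := cf_bounds i.
have := rmax_ge X k i; rewrite ger0_norm // => h.
have := H0 k i => h0.
apply: le_trans h; rewrite -[leRHS]mulr1; exact: ler_wpM2l.
Qed.

Lemma Tm_tr : \tr (Tm X) = norm1inf X.
Proof.
rewrite norm1inf_rmax /mxtrace; apply: eq_bigr => i _; exact: Tm_diag.
Qed.

End Feas.

Lemma Tm_res (m : nat) (M : 'M[R]_(m, n)) (X : 'M[R]_n) :
  M - M *m Tm X = (M - M *m X) *m diag_mx (\row_i cf X i).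
Proof.
by rewrite /Tm mulmxBr mulmx1 mulmxA mulmxBr mulmx1 opprB addrC subrK.
Qed.

End Helpers.

Section Col.
Variables (R : realFieldType) (m n : nat) (alpha : 'I_n -> R) (N : 'cV[R]_m -> R).
Hypothesis halpha : forall i, 0 < alpha i.
Hypothesis hN : is_vnorm N.

Lemma col_diag (A : 'M[R]_(m, n)) (c : 'I_n -> R) i :
  col i (A *m diag_mx (\row_j c j)) = c i *: col i A.
Proof. by apply/matrixP => k l; rewrite mul_mx_diag !mxE mulrC. Qed.

Lemma colnorm_diag (A : 'M[R]_(m, n)) (c : 'I_n -> R) :
  colnorm alpha N (A *m diag_mx (\row_j c j)) =
  \sum_i alpha i * (`|c i| * N (col i A)).
Proof.
case: hN => _ _ hZ _.
by apply: eq_bigr => i _; rewrite col_diag hZ.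
Qed.

Lemma colnorm_add (A B : 'M[R]_(m, n)) :
  colnorm alpha N (A + B) <= colnorm alpha N A + colnorm alpha N B.
Proof.
case: hN => _ _ _ hT.
rewrite /colnorm -big_split /=; apply: ler_sum => i _.
have -> : col i (A + B) = col i A + col i B by apply/matrixP => k l; rewrite !mxE.
rewrite -mulrDr; apply: ler_wpM2l; [exact: ltW | exact: hT].
Qed.

Lemma colnorm_scale (a : R) (A : 'M[R]_(m, n)) :
  colnorm alpha N (a *: A) = `|a| * colnorm alpha N A.
Proof.
case: hN => _ _ hZ _.
rewrite /colnorm mulr_sumr; apply: eq_bigr => i _.
have -> : col i (a *: A) = a *: col i A by apply/matrixP => k l; rewrite !mxE.
by rewrite hZ mulrCA.
Qed.

Lemma colnorm_ge0 (A : 'M[R]_(m, n)) : 0 <= colnorm alpha N A.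
Proof.
case: hN => h0 _ _ _.
apply: sumr_ge0 => i _; apply: mulr_ge0; [exact: ltW | exact: h0].
Qed.

End Col.

Section Main.
Variables (R : realFieldType) (m n : nat) (M : 'M[R]_(m, n)) (eps : R)
  (alpha : 'I_n -> R) (N : 'cV[R]_m -> R).
Hypothesis halpha : forall i, 0 < alpha i.
Hypothesis hN : is_vnorm N.

Lemma Tm_resnorm (X : 'M[R]_n) : (forall i j, 0 <= X i j) -> (forall i j, X i j <= 1) ->
  colnorm alpha N (M - M *m Tm X) =
  \sum_i alpha i * (cf X i * N (col i (M - M *m X))).
Proof.
move=> H0 H1; rewrite Tm_res colnorm_diag //; apply: eq_bigr => i _.
by rewrite ger0_norm //; case: (cf_bounds H0 H1 i).
Qed.

Lemma Tm_resle (X : 'M[R]_n) : (forall i j, 0 <= X i j) -> (forall i j, X i j <= 1) ->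
  colnorm alpha N (M - M *m Tm X) <= colnorm alpha N (M - M *m X).
Proof.
move=> H0 H1; rewrite Tm_resnorm //; apply: ler_sum => i _.
case: (cf_bounds H0 H1 i) => c0 c1; case: hN => hn _ _ _.
apply: ler_wpM2l; first exact: ltW.
rewrite -[leRHS]mul1r; apply: ler_wpM2r => //.
Qed.

Lemma feas1_Tm X : feasP1 M alpha N eps X ->
  feasP2 M alpha N eps (Tm X) /\ \tr (Tm X) = norm1inf X.
Proof.
move=> [H0 [Hr H1]]; split; last exact: Tm_tr.
split; first by move=> i j; exact: Tm_nonneg.
split; last by move=> i j; exact: Tm_rows.
exact: le_trans (Tm_resle H0 H1) Hr.
Qed.

Lemma feas2_1 X : feasP2 M alpha N eps X ->
  feasP1 M alpha N eps X /\ norm1inf X = \tr X.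
Proof.
move=> [H0 [Hr H1]]; split; last by apply: norm1inf_tr => // i j; case: (H1 i j).
split => //; split => // i j; case: (H1 i j) => a b; exact: le_trans a b.
Qed.

End Main.

Theorem theorem2 (R : realFieldType) (m n : nat) (M : 'M[R]_(m, n))
  (eps : R) (alpha : 'I_n -> R) (N : 'cV[R]_m -> R)
  (heps : 0 <= eps) (halpha : forall i, 0 < alpha i) (hN : is_vnorm N) :
  (forall v, valP1 M alpha N eps v <-> valP2 M alpha N eps v) /\
  (forall X, optP2 M alpha N eps X -> optP1 M alpha N eps X) /\
  (forall Xs, optP1 M alpha N eps Xs ->
     exists Xd, optP2 M alpha N eps Xd /\
       colnorm alpha N (M - M *m Xd) = colnorm alpha N (M - M *m Xs)).
Proof.
have feas1_Tm := @feas1_Tm R m n M eps alpha N halpha hN.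
have feas2_1 := @feas2_1 R m n M eps alpha N.
have Tm_resle := @Tm_resle R m n M alpha N halpha hN.
have Tm_resnorm := @Tm_resnorm R m n M alpha N hN.
split.
  move=> v; split.
    move=> [lb gl]; split.
      move=> r [X [fX ->]]; have [f1 e] := feas2_1 _ fX; rewrite -e.
      by apply: lb; exists X.
    move=> w hw; apply: gl => r [X [fX ->]].
    have [f2 e] := feas1_Tm _ fX; rewrite -e; apply: hw; by exists (Tm X).
  move=> [lb gl]; split.
    move=> r [X [fX ->]]; have [f2 e] := feas1_Tm _ fX; rewrite -e.
    by apply: lb; exists (Tm X).
  move=> w hw; apply: gl => r [X [fX ->]].
  have [f1 e] := feas2_1 _ fX; rewrite -e; apply: hw; by exists X.
split.
  move=> X [fX opt]; have [f1 e] := feas2_1 _ fX; split => // Y fY.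
  have [f2 e2] := feas1_Tm _ fY; rewrite e -e2; exact: opt.
move=> Xs [fXs opt]; exists (Tm Xs).
have [f2 e2] := feas1_Tm _ fXs.
split.
  split => // Y fY; have [f1 e1] := feas2_1 _ fY; rewrite e2 -e1; exact: opt.
have [H0 [Hr H1]] := fXs.
apply/le_anti/andP; split; first exact: Tm_resle.
set a := colnorm alpha N (M - M *m Xs).
set b := colnorm alpha N (M - M *m Tm Xs).
rewrite leNgt; apply/negP => hba.
set o := norm1inf Xs.
have o0 : 0 <= o by apply: sumr_ge0 => i _; exact: rmax_ge0.
have [oeq|opos] := eqVneq o 0.
  have rz : forall i, rmax Xs i = 0.
    move=> i; apply: (psumr_eq0P (P := predT) (F := rmax Xs)) => //.
    by move=> j _; exact: rmax_ge0.
  have cf1 : forall i, cf Xs i = 1.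
    move=> i; rewrite /cf rz.
    have := diag_le_rmax H0 i; rewrite rz => h.
    have := H0 i i => h'.
    have -> : Xs i i = 0 by apply/le_anti; rewrite h h'.
    by rewrite eqxx.
  move: hba; rewrite /b Tm_resnorm //.
  under eq_bigr => i _ do rewrite cf1 mul1r.
  by rewrite ltxx.
have opos' : 0 < o by rewrite lt_neqAle eq_sym opos.
set cm := colnorm alpha N M.
have hb0 : 0 <= b by exact: colnorm_ge0.
have hbe : b < eps by apply: lt_le_trans hba Hr.
have [t [t0 [t1 ht]]] : exists t : R, 0 < t /\ t < 1 /\ (1 - t) * cm + t * b <= eps.
  have [hc|hc] := leP cm eps.
    exists (2^-1); split; first lra. split; first lra. lra.
  exists ((cm - eps) / (cm - b)).
  have hp : 0 < cm - b by lra.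
  split; first by apply: divr_gt0; lra.
  split; first by rewrite ltr_pdivrMr // mul1r; lra.
  have -> : (1 - (cm - eps) / (cm - b)) * cm + (cm - eps) / (cm - b) * b = eps.
    by field; apply/eqP; lra.
  by [].
set Z := t *: Tm Xs.
have [g0 [gr g1]] := f2.
have fZ : feasP1 M alpha N eps Z.
  split.
    by move=> i j; rewrite /Z mxE; apply: mulr_ge0; [lra | exact: g0].
  split.
    have -> : M - M *m Z = (1 - t) *: M + t *: (M - M *m Tm Xs).
      by rewrite /Z -scalemxAr scalerBr scalerBl scale1r addrA subrK.
    apply: le_trans (colnorm_add _ _ _ _) _ => //.
    rewrite !colnorm_scale // !ger0_norm; [exact: ht|lra|lra].
  move=> i j; rewrite /Z mxE; have [a1 a2] := g1 i j; have := g0 i j.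
  move=> h; have : Tm Xs i j <= 1 by exact: le_trans a1 a2.
  move=> h2; rewrite -[1]mulr1; apply: ler_pM; lra.
have := opt Z fZ.
have -> : norm1inf Z = t * o.
  rewrite norm1inf_tr.
  - rewrite /o -e2 /Z /mxtrace mulr_sumr; apply: eq_bigr => i _; rewrite mxE //.
  - by move=> i j; rewrite /Z mxE; apply: mulr_ge0; [lra | exact: g0].
  - have sE : forall (A : 'M[R]_n) k l, (t *: A) k l = t * A k l by move=> A k l; rewrite mxE.
    move=> i j; rewrite /Z !sE; apply: ler_wpM2l; [lra | exact: (g1 i j).1].
move=> h; have : t * o < o by rewrite -[ltRHS]mul1r ltr_pM2r.
by rewrite ltNge h.
Qed.
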